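(* Let $G=(S,C,H)$ be a spider graph with weight $r$ (thin with $r\ge2$, or thick with $r\ge3$) and let $T_H$ be an MDNS of $G[H]$. Then $\tilde\gamma_{gr}^{\times 2}(G)=\tilde\gamma_{gr}^{\times 2}(G[C\cup S])+\tilde\gamma_{gr}^{\times 2}(G[H])$. Moreover, if $G$ is thin, $T_H\oplus(c_1,\dots,c_r,s_1,\dots,s_r)$ is an MDNS of $G$, and if $G$ is thick, $T_H\oplus(s_1,\dots,s_r,c_1,c_2)$ is an MDNS of $G$.
   Context: Graphs are finite, simple, undirected; $N[v]$ is the closed neighborhood. A sequence of distinct vertices $(v_1,\dots,v_k)$ is a double neighborhood sequence (DNS) if for each $i$ some $u\in N[v_i]$ satisfies $|\{j<i:u\in N[v_j]\}|\le 1$; an MDNS is a DNS of maximum length and $\tilde\gamma_{gr}^{\times 2}$ is that length. For the graph with no vertices, the MDNS is the empty sequence and $\tilde\gamma_{gr}^{\times 2}=0$. $\oplus$ denotes concatenation of sequences. A spider graph $G=(S,C,H)$: $V(G)$ is partitioned into $S=\{s_1,\dots,s_r\}$ (stable), $C=\{c_1,\dots,c_r\}$ (clique), $H$ (possibly empty, arbitrary edges inside), $r\ge2$, every vertex of $C$ adjacent to every vertex of $H$, no edges between $H$ and $S$; it is thin if $s_i c_j\in E$ iff $i=j$, thick if $s_ic_j\in E$ iff $i\neq j$. $r$ is the weight. *)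

(* Defs.v *)
From mathcomp Require Import all_boot.
Set Implicit Arguments. Unset Strict Implicit. Unset Printing Implicit Defensive.

Section DNS.
Variables (T : finType) (e : rel T).

Definition inN (v u : T) : bool := (u == v) || e v u.

(* DNS condition in the induced subgraph G[X]: closed neighbourhoods are
   N[v] ∩ X.  [dns_ok X pre rest] checks each element v of rest, with
   [pre] the vertices chosen before it. *)
Fixpoint dns_ok (X : {set T}) (pre rest : seq T) : bool :=
  match rest with
  | [::] => true
  | v :: rest' =>
      [exists u, [&& u \in X, inN v u & count (fun w => inN w u) pre <= 1]]
      && dns_ok X (rcons pre v) rest'
  end.

Definition is_dns (X : {set T}) (s : seq T) : bool :=
  [&& uniq s, all (fun x => x \in X) s & dns_ok X [::] s].

(* maximum length of a DNS of G[X] (lengths are bounded by #|X|) *)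
Definition gamma_gr2 (X : {set T}) : nat :=
  \max_(n < #|X|.+1 | [exists t : n.-tuple T, is_dns X t]) n.

Definition is_mdns (X : {set T}) (s : seq T) : Prop :=
  is_dns X s /\ forall t : seq T, is_dns X t -> size t <= size s.

End DNS.

(* Spider graph G = (S, C, H) of weight r on vertex type T, with
   S = {s 0, ..., s (r-1)}, C = {c 0, ..., c (r-1)} (0-indexed). *)
Definition spider (T : finType) (e : rel T) (r : nat) (s c : nat -> T)
    (H : {set T}) : Prop :=
  [/\ 2 <= r,
      {in [pred i | i < r] &, injective s},
      {in [pred i | i < r] &, injective c},
      (forall i j, i < r -> j < r -> s i != c j) &
      (forall i, i < r -> s i \notin H /\ c i \notin H)]
  /\ (forall x, x \in H \/ (exists2 i, i < r & x = s i)
                         \/ (exists2 i, i < r & x = c i))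
  /\ [/\ (forall i j, i < r -> j < r -> ~~ e (s i) (s j)),
      (forall i j, i < r -> j < r -> i != j -> e (c i) (c j)) &
      (forall i h, i < r -> h \in H -> e (c i) h /\ ~~ e h (s i))].

Definition spider_thin (T : finType) (e : rel T) (r : nat) (s c : nat -> T) :=
  forall i j, i < r -> j < r -> e (s i) (c j) = (i == j).

Definition spider_thick (T : finType) (e : rel T) (r : nat) (s c : nat -> T) :=
  forall i j, i < r -> j < r -> e (s i) (c j) = (i != j).

Definition CS_set (T : finType) (r : nat) (s c : nat -> T) : {set T} :=
  [set x | x \in map s (iota 0 r) ++ map c (iota 0 r)].

(* Main.v *)
Require Import Defs.
From mathcomp Require Import all_boot.
Set Implicit Arguments. Unset Strict Implicit. Unset Printing Implicit Defensive.

Lemma count0 (A : eqType) (a : pred A) s : (forall x, x \in s -> ~~ a x) -> count a s = 0.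
Proof.
move=> H; rewrite (eq_in_count (a2 := pred0)) ?count_pred0 // => x /H.
by move/negbTE.
Qed.

Section Gen.
Variables (T : finType) (e : rel T).

Definition good (X : {set T}) (pre : seq T) (v : T) : bool :=
  [exists u, [&& u \in X, inN e v u & count (fun w => inN e w u) pre <= 1]].

Lemma inN_refl x : inN e x x.
Proof. by rewrite /inN eqxx. Qed.

Lemma dns_ok_cons X pre v rest :
  dns_ok e X pre (v :: rest) = good X pre v && dns_ok e X (rcons pre v) rest.
Proof. by []. Qed.

Lemma dns_ok_cat X pre a b :
  dns_ok e X pre (a ++ b) = dns_ok e X pre a && dns_ok e X (pre ++ a) b.
Proof.
elim: a pre => [|v a IH] pre /=; first by rewrite cats0.
by rewrite IH cat_rcons andbA.
Qed.

Lemma dns_ok_sub (X Y : {set T}) pre rest : X \subset Y -> dns_ok e X pre rest -> dns_ok e Y pre rest.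
Proof.
move=> sXY; elim: rest pre => [|v rest IH] pre //=.
case/andP=> /existsP[u /and3P[uX vu cu]] ok; rewrite IH // andbT.
by apply/existsP; exists u; rewrite (subsetP sXY) ?vu ?cu.
Qed.

Lemma dns_ok_iota X pre (f : nat -> T) n :
  (forall i, i < n -> good X (pre ++ map f (iota 0 i)) (f i)) ->
  dns_ok e X pre (map f (iota 0 n)).
Proof.
elim: n => [|n IH] Hg //.
rewrite -addn1 iotaD map_cat dns_ok_cat IH; last by move=> i lt; apply: Hg; exact: leqW.
rewrite add0n /= andbT; exact: Hg.
Qed.

Lemma dns_ok_filter X Y (P : pred T) pre rest :
  (forall pre v, P v -> good X pre v -> good Y (filter P pre) v) ->
  dns_ok e X pre rest -> dns_ok e Y (filter P pre) (filter P rest).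
Proof.
move=> Hg; elim: rest pre => [|v rest IH] pre //.
rewrite dns_ok_cons => /andP[gv ok] /=.
have := IH _ ok; rewrite filter_rcons.
case: ifP => Pv // ok'.
by rewrite dns_ok_cons ok' andbT; apply: Hg.
Qed.

Lemma count_filter_le (a P : pred T) s : count a (filter P s) <= count a s.
Proof. by rewrite count_filter; apply: sub_count => x /andP[]. Qed.


Lemma count_disj_le (a b1 b2 : pred T) s :
  (forall x, b1 x -> b2 x -> False) -> subpred b1 a -> subpred b2 a ->
  count b1 s + count b2 s <= count a s.
Proof.
move=> dis s1 s2; rewrite -count_predUI.
rewrite (count0 (a := predI b1 b2)); last first.
  by move=> x _ /=; apply/negP => /andP[h1 h2]; exact: dis h1 h2.
by rewrite addn0; apply: sub_count => x /= /orP[/s1|/s2].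
Qed.

Lemma dns_size_le X s : is_dns e X s -> size s <= #|X|.
Proof.
case/and3P=> us /allP aX _.
rewrite -(card_uniqP us); apply: subset_leq_card; apply/subsetP => x.
exact: aX.
Qed.

Lemma gamma_eq X s : is_dns e X s -> (forall t, is_dns e X t -> size t <= size s) ->
  gamma_gr2 e X = size s.
Proof.
move=> ds mx; apply/eqP; rewrite eqn_leq; apply/andP; split.
  apply/bigmax_leqP => i /existsP[t dt]; rewrite -(size_tuple t); exact: mx.
have lt : size s < #|X|.+1 by rewrite ltnS dns_size_le.
have := @leq_bigmax_cond _ (fun n : 'I_#|X|.+1 => [exists t : n.-tuple T, is_dns e X t])
   (fun n => nat_of_ord n) (Ordinal lt).
apply => /=; apply/existsP; exists (in_tuple s); exact: ds.
Qed.

End Gen.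

From mathcomp Require Import zify.

Section Spider.
Variables (T : finType) (e : rel T) (r : nat) (s c : nat -> T) (H : {set T}).
Hypothesis esymm : symmetric e.
Hypothesis r2 : 2 <= r.
Hypothesis sinj : {in [pred i | i < r] &, injective s}.
Hypothesis cinj : {in [pred i | i < r] &, injective c}.
Hypothesis scne : forall i j, i < r -> j < r -> s i != c j.
Hypothesis sH : forall i, i < r -> s i \notin H /\ c i \notin H.
Hypothesis cover : forall x, x \in H \/ (exists2 i, i < r & x = s i)
                         \/ (exists2 i, i < r & x = c i).
Hypothesis ssE : forall i j, i < r -> j < r -> ~~ e (s i) (s j).
Hypothesis ccE : forall i j, i < r -> j < r -> i != j -> e (c i) (c j).
Hypothesis chE : forall i h, i < r -> h \in H -> e (c i) h /\ ~~ e h (s i).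

Let Sl := map s (iota 0 r).
Let Cl := map c (iota 0 r).
Let isS := fun x => x \in Sl.
Let isC := fun x => x \in Cl.
Let inH := fun x => x \in H.
Let notH := fun x => x \notin H.

Lemma memSl x : x \in Sl -> exists2 i, i < r & x = s i.
Proof. by case/mapP=> i; rewrite mem_iota add0n => /andP[_ lt] ->; exists i. Qed.
Lemma memCl x : x \in Cl -> exists2 i, i < r & x = c i.
Proof. by case/mapP=> i; rewrite mem_iota add0n => /andP[_ lt] ->; exists i. Qed.
Lemma s_Sl i : i < r -> s i \in Sl.
Proof. by move=> lt; apply: map_f; rewrite mem_iota add0n lt. Qed.
Lemma c_Cl i : i < r -> c i \in Cl.
Proof. by move=> lt; apply: map_f; rewrite mem_iota add0n lt. Qed.

Lemma s_eq i j : i < r -> j < r -> (s i == s j) = (i == j).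
Proof.
move=> ir jr; apply/eqP/eqP => [|->] //; exact: sinj.
Qed.
Lemma c_eq i j : i < r -> j < r -> (c i == c j) = (i == j).
Proof.
move=> ir jr; apply/eqP/eqP => [|->] //; exact: cinj.
Qed.

Lemma inN_cs k i : k < r -> i < r -> inN e (c k) (s i) = e (s i) (c k).
Proof. by move=> kr ir; rewrite /inN (negbTE (scne ir kr)) /= esymm. Qed.
Lemma inN_ss k i : k < r -> i < r -> inN e (s k) (s i) = (k == i).
Proof. by move=> kr ir; rewrite /inN (negbTE (ssE kr ir)) orbF s_eq // eq_sym. Qed.
Lemma inN_hs w i : w \in H -> i < r -> inN e w (s i) = false.
Proof.
move=> wH ir; rewrite /inN (negbTE (proj2 (chE ir wH))) orbF.
by apply/eqP => E; have := proj1 (sH ir); rewrite E wH.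
Qed.
Lemma inN_hc w i : w \in H -> i < r -> inN e w (c i).
Proof. by move=> wH ir; rewrite /inN esymm (proj1 (chE ir wH)) orbT. Qed.
Lemma inN_cc k i : k < r -> i < r -> inN e (c k) (c i).
Proof.
move=> kr ir; rewrite /inN; case: (eqVneq i k) => [->|ik]; first by rewrite eqxx.
by rewrite ccE ?orbT // eq_sym.
Qed.

Lemma S_notH x : isS x -> x \notin H.
Proof. by case/memSl=> i ir ->; case: (sH ir). Qed.
Lemma C_notH x : isC x -> x \notin H.
Proof. by case/memCl=> i ir ->; case: (sH ir). Qed.
Lemma S_notC x : isS x -> ~~ isC x.
Proof.
case/memSl=> i ir ->; apply/negP => /memCl[j jr E].
by have := scne ir jr; rewrite E eqxx.
Qed.
Lemma notH_SC x : x \notin H -> isS x || isC x.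
Proof.
move=> xH; case: (cover x) => [xH'|[[i ir ->]|[i ir ->]]].
- by rewrite xH' in xH.
- by rewrite /isS s_Sl.
- by rewrite /isC c_Cl ?orbT.
Qed.

Lemma uniq_Sl : uniq Sl.
Proof. rewrite map_inj_in_uniq ?iota_uniq // => i j; rewrite !mem_iota !add0n => /andP[_ ?] /andP[_ ?]; exact: sinj. Qed.
Lemma uniq_Cl : uniq Cl.
Proof. rewrite map_inj_in_uniq ?iota_uniq // => i j; rewrite !mem_iota !add0n => /andP[_ ?] /andP[_ ?]; exact: cinj. Qed.

Lemma countS_le t : uniq t -> count isS t <= r.
Proof.
move=> ut; rewrite -size_filter.
have <- : size Sl = r by rewrite size_map size_iota.
apply: uniq_leq_size; first exact: filter_uniq.
by move=> x; rewrite mem_filter => /andP[].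
Qed.

Lemma goodH X pre v : v \in H -> good e X pre v -> good e H (filter inH pre) v.
Proof.
move=> vH /existsP[u /and3P[uX vu cu]].
have: u \in H \/ exists2 i, i < r & u = c i.
  move: vu; rewrite /inN => /orP[/eqP ->|evu]; first by left.
  case: (cover u) => [|[[i ir E]|]]; [by left| |by right].
  by move: evu; rewrite E (negbTE (proj2 (chE ir vH))).
case=> [uH|[i ir E]].
  apply/existsP; exists u; rewrite uH vu /=.
  exact: leq_trans (count_filter_le _ _ _) cu.
have sz : size (filter inH pre) <= 1.
  rewrite size_filter; apply: leq_trans cu; apply: sub_count => w wH.
  by rewrite E; apply: inN_hc.
apply/existsP; exists v; rewrite vH /inN eqxx /=.
exact: leq_trans (count_size _ _) sz.
Qed.

Lemma H_part X t : is_dns e X t -> is_dns e H (filter inH t).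
Proof.
case/and3P=> ut _ ok; rewrite /is_dns filter_uniq // filter_all /=.
by have := dns_ok_filter (P := inH) (@goodH X) ok.
Qed.

Lemma thin_bound t : uniq t -> count notH t <= r + r.
Proof.
move=> ut; rewrite -size_filter.
have -> : r + r = size (Cl ++ Sl) by rewrite size_cat !size_map size_iota.
apply: uniq_leq_size; first exact: filter_uniq.
move=> x; rewrite mem_filter mem_cat => /andP[/notH_SC /orP[xS|xC] _]; apply/orP; [by right|by left].
Qed.

Lemma notH_le_SC t : count notH t <= count isS t + count isC t.
Proof.
rewrite -count_predUI; apply: leq_trans (leq_addr _ _).
by apply: sub_count => x /notH_SC.
Qed.

Lemma split_count (P : pred T) k t : k < count P t ->
  exists p v q, [/\ t = p ++ v :: q, P v & count P p = k].
Proof.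
elim: t k => [|x t IH] k //=.
case Px: (P x) => /=.
  case: k => [|k] lt; first by exists [::], x, t.
  have [p [v [q [-> Pv cp]]]] := IH k lt.
  by exists (x :: p), v, q; rewrite /= Px cp.
move=> lt; have [p [v [q [-> Pv cp]]]] := IH k lt.
by exists (x :: p), v, q; rewrite /= Px cp.
Qed.

Section Thick.
Hypothesis thick : forall i j, i < r -> j < r -> e (s i) (c j) = (i != j).

Lemma cover2 pre x y u : x < r -> y < r -> filter isC pre = [:: c x; c y] ->
  (u \in H \/ exists2 i, i < r & u = c i) ->
  2 <= count (fun w => inN e w u) pre.
Proof.
move=> xr yr Ef Hu; apply: leq_trans (count_filter_le _ isC _); rewrite Ef /=.
case: Hu => [uH|[i ir ->]].
  by rewrite /inN (proj1 (chE xr uH)) (proj1 (chE yr uH)) !orbT.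
by rewrite !inN_cc.
Qed.

Lemma no_fourth X pre x y a w : x < r -> y < r -> a < r -> x != y -> x != a -> y != a ->
  filter isC pre = [:: c x; c y] -> ~~ good e X (rcons pre (c a)) w.
Proof.
move=> xr yr ar xy xa ya Ef; apply/negP => /existsP[u /and3P[_ _ cu]].
have Ef' : filter isC (rcons pre (c a)) = [:: c x; c y; c a].
  by rewrite filter_rcons /isC c_Cl // Ef.
have mono : count (fun w => inN e w u) pre <= count (fun w => inN e w u) (rcons pre (c a)).
  by rewrite -cats1 count_cat leq_addr.
case: (cover u) => [uH|[[j jr E]|[i ir E]]].
- have := cover2 xr yr Ef (or_introl uH); lia.
- move: cu; apply/negP; rewrite -ltnNge E.
  apply: leq_trans (count_filter_le _ isC _); rewrite Ef' /= !inN_cs // !thick //.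
  lia.
- have := cover2 xr yr Ef (or_intror (ex_intro2 _ _ i ir E)); lia.
Qed.

Lemma third_c X pre x y a : x < r -> y < r -> a < r -> x != y ->
  filter isC pre = [:: c x; c y] -> good e X pre (c a) ->
  exists2 j, j < r & s j \notin pre.
Proof.
move=> xr yr ar xy Ef /existsP[u /and3P[_ _ cu]].
case: (cover u) => [uH|[[j jr E]|[i ir E]]].
- by have := cover2 xr yr Ef (or_introl uH); rewrite leqNgt ltnS cu.
- exists j => //; apply/negP => jin; move: cu; apply/negP; rewrite -ltnNge E.
  have le := @count_disj_le _ (fun w => inN e w (s j)) (pred1 (s j))
     (predI (fun w => inN e w (s j)) isC) pre.
  apply: leq_trans (le _ _ _).
  + rewrite -count_filter Ef /= !inN_cs // !thick //.
    have : 0 < count (pred1 (s j)) pre by rewrite -has_count has_pred1.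
    move: (count_mem _ _) => k; clear -xy; lia.
  + move=> w /= /eqP -> /andP[_]; apply/negP; exact: S_notC (s_Sl jr).
  + by move=> w /= /eqP ->; rewrite /inN eqxx.
  + by move=> w /andP[].
- by have := cover2 xr yr Ef (or_intror (ex_intro2 _ _ i ir E)); rewrite leqNgt ltnS cu.
Qed.

Lemma thick_bound X t : is_dns e X t -> count notH t <= r + 2.
Proof.
case/and3P=> ut _ ok.
apply: leq_trans (notH_le_SC t) _.
have hS := countS_le ut.
case: (leqP (count isC t) 2) => hC; first lia.
have [p [v [q [Et Cv cp]]]] := split_count hC.
have [a ar Ev] := memCl Cv.
move: (ut) ok; rewrite Et cat_uniq dns_ok_cat /= => /and4P[up /norP[vp _] _ uq] /andP[okp /andP[gv okq]].
have [x [y [xr yr xy Ef]]] : exists x y, [/\ x < r, y < r, x != y & filter isC p = [:: c x; c y]].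
  move: cp; rewrite -size_filter; have : uniq (filter isC p) by exact: filter_uniq.
  case: (filter isC p) (fun z => mem_filter isC z p) => [|x0 [|y0 [|]]] //= mf /andP[].
  rewrite inE => x0y0 _ _.
  have /memCl[x xr Ex] : isC x0 by have := mf x0; rewrite inE eqxx => /esym/andP[].
  have /memCl[y yr Ey] : isC y0 by have := mf y0; rewrite !inE eqxx orbT => /esym/andP[].
  by exists x, y; split => //; [rewrite -(c_eq xr yr) -Ex -Ey | rewrite Ex Ey].
have inp z : c z \in filter isC p -> c z \in p by rewrite mem_filter => /andP[].
have xa : x != a.
  by apply/eqP => E; move: vp; rewrite Ev -E inp // Ef inE eqxx.
have ya : y != a.
  by apply/eqP => E; move: vp; rewrite Ev -E inp // Ef !inE eqxx orbT.
case: q Et uq okq => [|w q] Et uq okq; last first.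
  by move: okq; rewrite /= Ev; have := @no_fourth X p x y a w xr yr ar xy xa ya Ef; rewrite /good => /negbTE ->.
rewrite Ev in gv; have [j jr sjp] := third_c xr yr ar xy Ef gv.
have sjt : s j \notin t.
  by rewrite Et mem_cat (negbTE sjp) inE Ev (negbTE (scne jr ar)).
have h3 : count isC t = 3 by rewrite Et count_cat cp /= Ev /isC c_Cl.
have : size (s j :: filter isS t) <= r.
  rewrite -(size_iota 0 r) -(size_map s); apply: uniq_leq_size.
    by rewrite /= mem_filter (negbTE sjt) andbF /=; apply: filter_uniq.
  move=> z; rewrite inE mem_filter => /orP[/eqP ->|/andP[]//]; exact: s_Sl.
rewrite -Et /= size_filter h3; move: (count isS t) => k; clear; lia.
Qed.
End Thick.

Lemma cnt_H0 pre i : all inH pre -> i < r -> count (fun w => inN e w (s i)) pre = 0.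
Proof. by move=> /allP aH ir; apply: count0 => w /aH wH; rewrite inN_hs. Qed.

Lemma cnt_Spre i n : i < r -> n <= i ->
  count (fun w => inN e w (s i)) (map s (iota 0 n)) = 0.
Proof.
move=> ir ni; apply: count0 => w /mapP[k]; rewrite mem_iota add0n => /andP[_ kn] ->.
have ki : k < i := leq_trans kn ni.
by rewrite inN_ss ?ltn_eqF // (ltn_trans ki ir).
Qed.

Lemma cnt_Sl1 i : i < r -> count (fun w => inN e w (s i)) Sl <= 1.
Proof.
move=> ir; rewrite count_map (eq_in_count (a2 := pred1 i)) ?count_uniq_mem ?iota_uniq ?leq_b1 //.
by move=> k; rewrite mem_iota add0n => /andP[_ kr] /=; exact: inN_ss.
Qed.

Lemma uniq_CS : uniq (Cl ++ Sl).
Proof.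
rewrite cat_uniq uniq_Cl uniq_Sl andbT /=; apply/hasPn => x xS; exact: S_notC xS.
Qed.

Lemma C_notS x : isC x -> x \notin Sl.
Proof. by move=> xC; apply/negP => xS; move: (S_notC xS); rewrite xC. Qed.

Lemma finish (cs : seq T) B TH :
  (forall (X : {set T}) t, is_dns e X t -> count notH t <= B) -> size cs = B ->
  (forall (X : {set T}) pre, (forall i, i < r -> s i \in X) -> all inH pre -> dns_ok e X pre cs) ->
  uniq cs -> all (fun x => isS x || isC x) cs -> is_mdns e H TH ->
  [/\ gamma_gr2 e [set: T] = size TH + B, gamma_gr2 e (CS_set r s c) = B
    & is_mdns e [set: T] (TH ++ cs)].
Proof.
move=> bnd szcs okcs ucs acs [dTH mTH].
have dTH' := dTH; case/and3P: dTH' => uTH aTH okTH.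
have notHcs x : x \in cs -> x \notin H by move/(allP acs)/orP=> [/S_notH|/C_notH].
have dG : is_dns e [set: T] (TH ++ cs).
  rewrite /is_dns cat_uniq uTH ucs andbT /=; apply/and3P; split.
  - apply/hasPn => x /notHcs xH; apply/negP => xT.
    by move/allP: aTH => /(_ x xT); rewrite (negbTE xH).
  - by apply/allP => x; rewrite in_setT.
  - rewrite dns_ok_cat (dns_ok_sub (subsetT H) okTH) /=.
    by apply: okcs => // i _; exact: in_setT.
have bG t : is_dns e [set: T] t -> size t <= size (TH ++ cs).
  move=> dt; rewrite size_cat szcs -(count_predC inH t) leq_add //; last exact: bnd dt.
  rewrite -size_filter; apply: mTH; exact: H_part dt.
have dCS : is_dns e (CS_set r s c) cs.
  rewrite /is_dns ucs /=; apply/andP; split.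
    by apply/allP => x /(allP acs) xSC; rewrite /CS_set inE mem_cat.
  by apply: okcs => // i ir; rewrite /CS_set inE mem_cat s_Sl.
have bCS t : is_dns e (CS_set r s c) t -> size t <= B.
  move=> dt; rewrite -(count_predC inH t) (count0 (a:=inH)) ?add0n; first exact: bnd dt.
  move=> x xt; case/and3P: dt => _ /allP /(_ x xt); rewrite inE mem_cat.
  by case/orP => [/S_notH|/C_notH].
split.
- by rewrite (gamma_eq dG bG) size_cat szcs.
- by rewrite -szcs; apply: gamma_eq dCS _ => t dt; rewrite szcs; exact: bCS.
- by split.
Qed.

Section Thin.
Hypothesis thin : spider_thin e r s c.

Lemma thin_seq (X : {set T}) pre : (forall i, i < r -> s i \in X) -> all inH pre ->
  dns_ok e X pre (Cl ++ Sl).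
Proof.
move=> SX aH; rewrite dns_ok_cat; apply/andP; split.
  apply: dns_ok_iota => i ir; apply/existsP; exists (s i).
  rewrite SX // inN_cs // thin // eqxx /= count_cat cnt_H0 // add0n count_map.
  rewrite count0 // => k; rewrite mem_iota add0n => /andP[_ ki] /=.
  have kr := ltn_trans ki ir.
  by rewrite inN_cs // thin // eq_sym ltn_eqF.
apply: dns_ok_iota => i ir; apply/existsP; exists (s i).
rewrite SX // inN_refl /= !count_cat cnt_H0 // cnt_Spre // add0n addn0.
rewrite count_map (eq_in_count (a2 := pred1 i)) ?count_uniq_mem ?iota_uniq ?leq_b1 //.
by move=> k; rewrite mem_iota add0n => /andP[_ kr] /=; rewrite inN_cs // thin // eq_sym.
Qed.
End Thin.

Section Thick2.
Hypothesis thick : spider_thick e r s c.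

Lemma thick_seq (X : {set T}) pre : (forall i, i < r -> s i \in X) -> all inH pre ->
  dns_ok e X pre (Sl ++ [:: c 0; c 1]).
Proof.
have r1 : 1 < r := r2. have r0 : 0 < r := ltnW r2.
move=> SX aH; rewrite dns_ok_cat; apply/andP; split.
  apply: dns_ok_iota => i ir; apply/existsP; exists (s i).
  by rewrite SX // inN_refl /= count_cat cnt_H0 // cnt_Spre.
rewrite !dns_ok_cons /= andbT; apply/andP; split.
  apply/existsP; exists (s 1).
  rewrite SX // inN_cs // thick //= count_cat cnt_H0 // add0n; exact: cnt_Sl1.
apply/existsP; exists (s 0).
rewrite SX // inN_cs // thick //= -cats1 !count_cat cnt_H0 // add0n /=.
by rewrite inN_cs // thick // addn0 addn0; exact: cnt_Sl1.
Qed.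
End Thick2.

Lemma main_sec TH :
  (spider_thin e r s c \/ (spider_thick e r s c /\ 3 <= r)) -> is_mdns e H TH ->
  gamma_gr2 e [set: T] = gamma_gr2 e (CS_set r s c) + gamma_gr2 e H
  /\ (spider_thin e r s c ->
        is_mdns e [set: T] (TH ++ map c (iota 0 r) ++ map s (iota 0 r)))
  /\ (spider_thick e r s c ->
        is_mdns e [set: T] (TH ++ map s (iota 0 r) ++ [:: c 0; c 1])).
Proof.
move=> hcase mdTH.
have gH : gamma_gr2 e H = size TH by case: mdTH => d m; exact: gamma_eq d m.
have r0 : 0 < r := ltnW r2.
have nt : spider_thin e r s c -> spider_thick e r s c -> False.
  by move=> th tk; have := th 0 0 r0 r0; rewrite tk // eqxx.
case: hcase => [th|[tk r3]].
- have sz : size (Cl ++ Sl) = r + r by rewrite size_cat !size_map size_iota.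
  have al : all (fun x => isS x || isC x) (Cl ++ Sl).
    by apply/allP => x; rewrite mem_cat => /orP[xC|xS]; apply/orP; [right|left].
  have bd (X : {set T}) t : is_dns e X t -> count notH t <= r + r.
    by case/and3P => ut _ _; exact: thin_bound.
  have [g1 g2 m] := finish bd sz (@thin_seq th) uniq_CS al mdTH.
  split; first by rewrite g1 g2 gH addnC.
  by split => // tk; case: (nt th tk).
- have sz : size (Sl ++ [:: c 0; c 1]) = r + 2 by rewrite size_cat !size_map size_iota.
  have u : uniq (Sl ++ [:: c 0; c 1]).
    have r1 : 1 < r := r2. have r0' : 0 < r := ltnW r2.
    rewrite cat_uniq uniq_Sl /= orbF inE c_eq // andbT.
    by rewrite (negbTE (C_notS (c_Cl r0'))) (negbTE (C_notS (c_Cl r1))).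
  have al : all (fun x => isS x || isC x) (Sl ++ [:: c 0; c 1]).
    apply/allP => x; rewrite mem_cat !inE => /orP[xS|/orP[] /eqP ->]; apply/orP.
    * by left.
    * by right; apply: c_Cl.
    * by right; apply: c_Cl.
  have [g1 g2 m] := finish (@thick_bound tk) sz (@thick_seq tk) u al mdTH.
  split; first by rewrite g1 g2 gH addnC.
  by split => // th; case: (nt th tk).
Qed.

End Spider.

Theorem proposition8 (T : finType) (e : rel T) (r : nat) (s c : nat -> T)
    (H : {set T}) (TH : seq T) :
  symmetric e -> irreflexive e ->
  spider e r s c H ->
  (spider_thin e r s c \/ (spider_thick e r s c /\ 3 <= r)) ->
  is_mdns e H TH ->
  gamma_gr2 e [set: T] = gamma_gr2 e (CS_set r s c) + gamma_gr2 e H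
  /\ (spider_thin e r s c ->
        is_mdns e [set: T] (TH ++ map c (iota 0 r) ++ map s (iota 0 r)))
  /\ (spider_thick e r s c ->
        is_mdns e [set: T] (TH ++ map s (iota 0 r) ++ [:: c 0; c 1])).
Proof.
move=> esymm _ [[r2 sinj cinj scne sH] [cover [ssE ccE chE]]] hcase mdTH.
by apply: main_sec.
Qed.
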